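(* Let $I\subseteq(0,1)$ be an interval forecast, and let $(D_i)_{i\in\mathbb N_0}$ be non-negative real supermartingale multipliers for $I$ such that $(D_i^{\circledcirc})_{i\in\mathbb N_0}$ is a recursive enumeration of lower semicomputable test supermartingales for $I$ (i.e. there is a recursive $q:\mathbb N_0\times\mathbb S\times\mathbb N_0\to\mathbb Q$ with $q(i,s,n+1)\ge q(i,s,n)$ and $\lim_nq(i,s,n)=D_i^{\circledcirc}(s)$ for all $i,s,n$). Then the process $T(s)=\sum_{i=0}^\infty2^{-i-1}D_i^{\circledcirc}(s)$, $s\in\mathbb S$, is a lower semicomputable test supermartingale for $I$.
   Context: $\mathcal X=\{0,1\}$, $\mathbb S=\bigcup_{n\ge0}\mathcal X^n$ (finite binary strings), $\square$ the empty string, $sx$ concatenation. Interval forecasts are nonempty closed intervals $I\subseteq[0,1]$; $\overline E_I(f)=\max_{p\in I}[pf(1)+(1-p)f(0)]$. A real multiplier process $D$ maps $\mathbb S$ to gambles $\mathcal X\to\mathbb R$; it is a supermartingale multiplier for $I$ if $\overline E_I(D(s))\le1$ for all $s$; it generates $D^{\circledcirc}(x_1,\dots,x_n)=\prod_{k=0}^{n-1}D(x_{1:k})(x_{k+1})$. A test supermartingale for $I$ is $T:\mathbb S\to\mathbb R_{\ge0}$ with $T(\square)=1$ and $\overline E_I(T(s\,\cdot)-T(s))\le0$ for all $s$; it is lower semicomputable if there is a recursive $r:\mathbb S\times\mathbb N_0\to\mathbb Q$ non-decreasing in $n$ with $T(s)=\lim_nr(s,n)$. *)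

(* Defs.v *)
From HB Require Import structures.
From mathcomp Require Import all_boot all_order all_algebra.
From mathcomp Require Import all_classical all_reals all_analysis.
Set Implicit Arguments. Unset Strict Implicit. Unset Printing Implicit Defensive.
Import Order.TTheory GRing.Theory Num.Theory numFieldNormedType.Exports.
Local Open Scope classical_set_scope.
Local Open Scope ring_scope.

(* Computability: mu-recursive (general recursive, total) functions    *)
(* of arity k, as maps seq nat -> nat (only inputs of size k matter).  *)

Fixpoint prim_rec (g : seq nat -> nat) (h : seq nat -> nat)
  (x : nat) (v : seq nat) : nat :=
  match x with
  | 0 => g v
  | x'.+1 => h (x' :: prim_rec g h x' v :: v)
  end.

Inductive murec : nat -> (seq nat -> nat) -> Prop :=
| mr_zero k : murec k (fun _ => 0%N)
| mr_succ : murec 1 (fun v => (nth 0%N v 0).+1)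
| mr_proj k i : (i < k)%N -> murec k (fun v => nth 0%N v i)
| mr_comp k m (h : seq nat -> nat) (gs : nat -> seq nat -> nat) :
    murec m h -> (forall i, (i < m)%N -> murec k (gs i)) ->
    murec k (fun v => h [seq gs i v | i <- iota 0 m])
| mr_prec k (g h : seq nat -> nat) :
    murec k g -> murec k.+2 h ->
    murec k.+1 (fun v => prim_rec g h (head 0%N v) (behead v))
| mr_min k (g : seq nat -> nat) (f : seq nat -> nat) :
    murec k.+1 g ->
    (forall v, g (f v :: v) = 0%N /\ forall y, (y < f v)%N -> g (y :: v) <> 0%N) ->
    murec k f.

Definition recursive_fun (k : nat) (f : seq nat -> nat) : Prop :=
  exists g, murec k g /\ forall v, size v = k -> g v = f v.

(* Goedel numbering of binary strings: bijective base-2 numeration. *)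
Fixpoint code_str (s : seq bool) : nat :=
  match s with
  | [::] => 0%N
  | b :: s' => (2 * code_str s' + (1 + b))%N
  end.

Definition rat_of (a b d : nat) : rat := ((a%:Z - b%:Z)%:~R / (d.+1)%:R).

Definition recursive_q3 (q : nat -> seq bool -> nat -> rat) : Prop :=
  exists a b d : seq nat -> nat,
    [/\ recursive_fun 3 a, recursive_fun 3 b, recursive_fun 3 d &
      forall i s n, q i s n =
        rat_of (a [:: i; code_str s; n]) (b [:: i; code_str s; n])
               (d [:: i; code_str s; n])].

Definition recursive_q2 (r : seq bool -> nat -> rat) : Prop :=
  exists a b d : seq nat -> nat,
    [/\ recursive_fun 2 a, recursive_fun 2 b, recursive_fun 2 d &
      forall s n, r s n =
        rat_of (a [:: code_str s; n]) (b [:: code_str s; n])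
               (d [:: code_str s; n])].

(* Imprecise-probability notions.  X = bool (1 = true), S = seq bool,  *)
(* sx = rcons s x.  An interval forecast I = [lo, hi].                 *)

Section Forecast.
Variable R : realType.

Definition upper_exp (lo hi : R) (f : bool -> R) : R :=
  sup [set p * f true + (1 - p) * f false | p in `[lo, hi]].

Definition supermart_multiplier (lo hi : R) (D : seq bool -> bool -> R) : Prop :=
  forall s, upper_exp lo hi (D s) <= 1.

Definition gen_process (D : seq bool -> bool -> R) (s : seq bool) : R :=
  \prod_(k < size s) D (take k s) (nth false s k).

Definition test_supermartingale (lo hi : R) (T : seq bool -> R) : Prop :=
  [/\ forall s, 0 <= T s,
      T [::] = 1 &
      forall s, upper_exp lo hi (fun x => T (rcons s x) - T s) <= 0].

Definition lower_semicomputable (T : seq bool -> R) : Prop :=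
  exists r : seq bool -> nat -> rat,
    [/\ recursive_q2 r,
        forall s n, r s n <= r s n.+1 &
        forall s, (fun n => (ratr (r s n) : R)) @ \oo --> T s].

End Forecast.

(* Main.v *)
Require Import Defs.
From HB Require Import structures.
From mathcomp Require Import all_boot all_order all_algebra.
From mathcomp Require Import all_classical all_reals all_analysis.
From mathcomp Require Import ring lra.
Import Order.TTheory GRing.Theory Num.Theory numFieldNormedType.Exports.
Local Open Scope classical_set_scope.
Local Open Scope ring_scope.
Set Implicit Arguments. Unset Strict Implicit.


Local Notation rf := recursive_fun.
Local Notation "v `_n i" := (nth 0%N v i) (at level 3, only parsing).

Lemma rf_ext k f g : rf k f -> (forall v, size v = k -> f v = g v) -> rf k g.
Proof. by move=> [h [Hh E]] Efg; exists h; split => // v Hv; rewrite E // Efg. Qed.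

Lemma rf_proj k i : (i < k)%N -> rf k (fun v => nth 0%N v i).
Proof. by move=> H; exists (fun v => nth 0%N v i); split => //; constructor. Qed.

Lemma rf_zero k : rf k (fun _ => 0%N).
Proof. by exists (fun _ => 0%N); split => //; constructor. Qed.

Lemma rf_succ : rf 1 (fun v => (nth 0%N v 0).+1).
Proof. by exists (fun v => (nth 0%N v 0).+1); split => //; constructor. Qed.

Lemma rf_comp k m h (gs : nat -> seq nat -> nat) : rf m h ->
  (forall i, (i < m)%N -> rf k (gs i)) ->
  rf k (fun v => h [seq gs i v | i <- iota 0 m]).
Proof.
move=> [h' [Hh' Eh]] Hg.
have : forall i, exists g, (i < m)%N -> murec k g /\ forall v, size v = k -> g v = gs i v.
  move=> i; case: (ltnP i m) => Hi.
    by have [g [? ?]] := Hg i Hi; exists g.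
  by exists (fun _ => 0%N).
move=> /choice [G HG].
exists (fun v => h' [seq G i v | i <- iota 0 m]); split.
  by apply: mr_comp => // i Hi; case: (HG i Hi).
move=> v Hv; rewrite Eh ?size_map ?size_iota //; congr h.
apply/eq_in_map => i; rewrite mem_iota add0n => /andP[_ Hi].
by case: (HG i Hi) => _ ->.
Qed.

Lemma rf_comp1 k h g1 : rf 1 h -> rf k g1 -> rf k (fun v => h [:: g1 v]).
Proof.
move=> Hh H1; apply: rf_ext (@rf_comp k _ h (fun i => g1) Hh _) _ => //.
Qed.

Lemma rf_comp2 k h g1 g2 : rf 2 h -> rf k g1 -> rf k g2 ->
  rf k (fun v => h [:: g1 v; g2 v]).
Proof.
move=> Hh H1 H2.
apply: rf_ext (@rf_comp k _ h (fun i => if i is 0%N then g1 else g2) Hh _) _ => //.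
by case.
Qed.

Lemma rf_comp3 k h g1 g2 g3 : rf 3 h -> rf k g1 -> rf k g2 -> rf k g3 ->
  rf k (fun v => h [:: g1 v; g2 v; g3 v]).
Proof.
move=> Hh H1 H2 H3.
apply: rf_ext (@rf_comp k _ h (fun i => match i with 0%N => g1 | 1%N => g2 | _ => g3 end) Hh _) _ => //.
by case=> [|[|]].
Qed.

Lemma prim_rec_ext k g g' h h' x v : size v = k ->
  (forall w, size w = k -> g w = g' w) ->
  (forall w, size w = k.+2 -> h w = h' w) ->
  prim_rec g h x v = prim_rec g' h' x v.
Proof.
move=> Hv Eg Eh; elim: x => [|x IH] /=; first exact: Eg.
by rewrite Eh /= ?Hv // IH.
Qed.

Lemma rf_prec k g h : rf k g -> rf k.+2 h ->
  rf k.+1 (fun v => prim_rec g h (head 0%N v) (behead v)).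
Proof.
move=> [g' [Hg Eg]] [h' [Hh Eh]].
exists (fun v => prim_rec g' h' (head 0%N v) (behead v)); split.
  exact: mr_prec.
move=> [|x v] //= [Hv]; apply: prim_rec_ext Hv _ _ => w Hw.
  by rewrite Eg. by rewrite Eh.
Qed.

Lemma rf_const k c : rf k (fun _ => c).
Proof.
elim: c => [|c IH]; first exact: rf_zero.
have H := rf_comp1 rf_succ IH; by apply: rf_ext H _.
Qed.

Lemma rf_add : rf 2 (fun v => v`_n 0 + v`_n 1)%N.
Proof.
have H := rf_prec (rf_proj (i:=0) (k:=1) isT) (rf_comp1 rf_succ (rf_proj (i:=1) (k:=3) isT)).
apply: rf_ext H _ => -[|x [|y [|]]] //= _.
by elim: x => //= x ->.
Qed.

Lemma rf_mul : rf 2 (fun v => v`_n 0 * v`_n 1)%N.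
Proof.
have H := rf_prec (rf_zero 1) (rf_comp2 rf_add (rf_proj (i:=1) (k:=3) isT) (rf_proj (i:=2) (k:=3) isT)).
apply: rf_ext H _ => -[|x [|y [|]]] //= _.
by elim: x => //= x ->; rewrite mulSn addnC.
Qed.

Lemma rf_pred : rf 1 (fun v => (v`_n 0).-1).
Proof.
have H := rf_prec (rf_zero 0) (rf_proj (i:=0) (k:=2) isT).
by apply: rf_ext H _ => -[|x [|]] //= _; case: x.
Qed.

Lemma rf_pow2 : rf 1 (fun v => 2 ^ v`_n 0)%N.
Proof.
have H := rf_prec (rf_const 0 1) (rf_comp2 rf_add (rf_proj (i:=1) (k:=2) isT) (rf_proj (i:=1) (k:=2) isT)).
apply: rf_ext H _ => -[|x [|]] //= _.
by elim: x => //= x ->; rewrite expnS mul2n addnn.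
Qed.

Lemma rf_subr : rf 2 (fun v => v`_n 1 - v`_n 0)%N.
Proof.
have H := rf_prec (rf_proj (i:=0) (k:=1) isT) (rf_comp1 rf_pred (rf_proj (i:=1) (k:=3) isT)).
apply: rf_ext H _ => -[|x [|y [|]]] //= _.
by elim: x => /= [|x ->]; rewrite ?subn0 // subnS.
Qed.

Definition Ef (dd : seq nat -> nat) x c n := ((dd [:: x; c; n]).+1 * 2 ^ x.+1)%N.
Definition Cf (aa bb : seq nat -> nat) x c n := (aa [:: x; c; n] - bb [:: x; c; n])%N.
Definition denh dd := fun v : seq nat => (v`_n 1 * Ef dd v`_n 0 v`_n 2 v`_n 3)%N.
Definition denf dd v := prim_rec (fun _ => 1%N) (denh dd) (head 0%N v) (behead v).
Definition numh aa bb dd := fun v : seq nat =>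
  (v`_n 1 * Ef dd v`_n 0 v`_n 2 v`_n 3 +
   Cf aa bb v`_n 0 v`_n 2 v`_n 3 * denf dd [:: v`_n 0; v`_n 2; v`_n 3])%N.
Definition numf aa bb dd v := prim_rec (fun _ => 0%N) (numh aa bb dd) (head 0%N v) (behead v).
Definition Af aa bb dd v := numf aa bb dd [:: v`_n 1; v`_n 0; v`_n 1].
Definition Df dd v := (denf dd [:: v`_n 1; v`_n 0; v`_n 1]).-1.

Lemma rf_p k i : (i < k)%N -> rf k (fun v => nth 0%N v i). Proof. exact: rf_proj. Qed.

Lemma rf_Ef dd : rf 3 dd -> rf 4 (fun v => Ef dd v`_n 0 v`_n 2 v`_n 3).
Proof.
move=> Hd.
have H := rf_comp2 rf_mul (rf_comp1 rf_succ (rf_comp3 Hd (rf_p (k:=4) (i:=0) isT) (rf_p (k:=4) (i:=2) isT) (rf_p (k:=4) (i:=3) isT)))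
   (rf_comp1 rf_pow2 (rf_comp1 rf_succ (rf_p (k:=4) (i:=0) isT))).
by apply: rf_ext H _.
Qed.

Lemma rf_Cf aa bb : rf 3 aa -> rf 3 bb -> rf 4 (fun v => Cf aa bb v`_n 0 v`_n 2 v`_n 3).
Proof.
move=> Ha Hb.
have H := rf_comp2 rf_subr (rf_comp3 Hb (rf_p (k:=4) (i:=0) isT) (rf_p (k:=4) (i:=2) isT) (rf_p (k:=4) (i:=3) isT))
  (rf_comp3 Ha (rf_p (k:=4) (i:=0) isT) (rf_p (k:=4) (i:=2) isT) (rf_p (k:=4) (i:=3) isT)).
by apply: rf_ext H _.
Qed.

Lemma rf_denf dd : rf 3 dd -> rf 3 (denf dd).
Proof.
move=> Hd; apply: rf_prec; first exact: rf_const.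
have H := rf_comp2 rf_mul (rf_p (k:=4) (i:=1) isT) (rf_Ef Hd).
by apply: rf_ext H _.
Qed.

Lemma rf_numf aa bb dd : rf 3 aa -> rf 3 bb -> rf 3 dd -> rf 3 (numf aa bb dd).
Proof.
move=> Ha Hb Hd; apply: rf_prec; first exact: rf_const.
have H := rf_comp2 rf_add (rf_comp2 rf_mul (rf_p (k:=4) (i:=1) isT) (rf_Ef Hd))
  (rf_comp2 rf_mul (rf_Cf Ha Hb) (rf_comp3 (rf_denf Hd) (rf_p (k:=4) (i:=0) isT) (rf_p (k:=4) (i:=2) isT) (rf_p (k:=4) (i:=3) isT))).
by apply: rf_ext H _.
Qed.

Lemma rf_Af aa bb dd : rf 3 aa -> rf 3 bb -> rf 3 dd -> rf 2 (Af aa bb dd).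
Proof.
move=> Ha Hb Hd.
have H := rf_comp3 (rf_numf Ha Hb Hd) (rf_p (k:=2) (i:=1) isT) (rf_p (k:=2) (i:=0) isT) (rf_p (k:=2) (i:=1) isT).
by apply: rf_ext H _.
Qed.

Lemma rf_Df dd : rf 3 dd -> rf 2 (Df dd).
Proof.
move=> Hd.
have H := rf_comp1 rf_pred (rf_comp3 (rf_denf Hd) (rf_p (k:=2) (i:=1) isT) (rf_p (k:=2) (i:=0) isT) (rf_p (k:=2) (i:=1) isT)).
by apply: rf_ext H _.
Qed.


Lemma Ef_gt0 dd i c n : (0 < Ef dd i c n)%N.
Proof. by rewrite /Ef muln_gt0 expn_gt0. Qed.

Lemma denf_prod dd x c n : denf dd [:: x; c; n] = (\prod_(i < x) Ef dd i c n)%N.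
Proof.
elim: x => [|x IH]; first by rewrite /denf /= big_ord0.
rewrite /denf /= in IH *.
by rewrite big_ord_recr /= -IH.
Qed.

Lemma denf_gt0 dd x c n : (0 < denf dd [:: x; c; n])%N.
Proof. by rewrite denf_prod prodn_gt0 // => i; exact: Ef_gt0. Qed.

Lemma numf_sum aa bb dd x c n :
  (numf aa bb dd [:: x; c; n])%:R / (denf dd [:: x; c; n])%:R =
  \sum_(i < x) (Cf aa bb i c n)%:R / (Ef dd i c n)%:R :> rat.
Proof.
elim: x => [|x IH]; first by rewrite big_ord0 /numf /= mul0r.
rewrite big_ord_recr /= -IH.
have D0 : (denf dd [:: x; c; n])%:R != 0 :> rat by rewrite pnatr_eq0 -lt0n denf_gt0.
have E0 : (Ef dd x c n)%:R != 0 :> rat by rewrite pnatr_eq0 -lt0n Ef_gt0.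
rewrite /numf /denf /= -/(numf aa bb dd _) -/(denf dd _) /numh /denh /=.
rewrite natrD !natrM; field.
rewrite D0 andbT pnatr_eq0 expn_eq0 /=.
have h := ler0n rat (dd [:: x; c; n]).
by rewrite gt_eqF //; lra.
Qed.

Lemma term_eq aa bb dd i c n :
  (Cf aa bb i c n)%:R / (Ef dd i c n)%:R =
  2 ^- i.+1 * Num.max (rat_of (aa [:: i; c; n]) (bb [:: i; c; n]) (dd [:: i; c; n])) 0 :> rat.
Proof.
rewrite /Cf /Ef /rat_of.
set a := aa _; set b := bb _; set d := dd _.
have dpos : 0 < (d.+1)%:R :> rat by rewrite ltr0n.
case: (leqP a b) => Hab.
  have -> : (a - b)%N = 0%N by apply/eqP; rewrite subn_eq0.
  rewrite mul0r max_r ?mulr0 //.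
  rewrite pmulr_lle0 ?invr_gt0 //.
  by rewrite lerz0 subr_le0 lez_nat.
rewrite subzn ?(ltnW Hab) // -pmulrn max_l; last by rewrite divr_ge0.
rewrite natrM natrX invfM.
by rewrite mulrA mulrC.
Qed.

Lemma r_eq (aa bb dd : seq nat -> nat) (c n : nat) :
  \sum_(i < n) 2 ^- i.+1 * Num.max (rat_of (aa [:: (i : nat); c; n]) (bb [:: (i : nat); c; n]) (dd [:: (i : nat); c; n])) 0
  = rat_of (Af aa bb dd [:: c; n]) 0%N (Df dd [:: c; n]).
Proof.
rewrite /rat_of /Af /Df /= prednK ?denf_gt0 // subr0 -pmulrn numf_sum.
by apply: eq_bigr => i _; rewrite term_eq.
Qed.


Section An.
Variable R : realType.

Lemma ue_ge (lo hi : R) (f : bool -> R) p : 0 <= lo -> hi <= 1 -> lo <= p -> p <= hi ->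
  p * f true + (1 - p) * f false <= upper_exp lo hi f.
Proof.
move=> H0 H1 Hp1 Hp2; apply: sup_upper_bound; last first.
  by exists p => //; rewrite /= in_itv /= Hp1 Hp2.
split; first by exists (p * f true + (1 - p) * f false), p => //; rewrite /= in_itv /= Hp1 Hp2.
exists (`|f true| + `|f false|) => _ [p' /= Hp' <-].
move: Hp'; rewrite in_itv /= => /andP[Ha Hb].
have h1 := ler_norm (f true); have h2 := ler_norm (f false).
have h3 := normr_ge0 (f true); have h4 := normr_ge0 (f false).
have e1 : p' * f true <= p' * `|f true| by rewrite ler_wpM2l //; lra.
have e2 : (1 - p') * f false <= (1 - p') * `|f false| by rewrite ler_wpM2l //; lra.
nra.
Qed.

Lemma ue_le (lo hi : R) (f : bool -> R) c : lo <= hi ->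
  (forall p, lo <= p -> p <= hi -> p * f true + (1 - p) * f false <= c) ->
  upper_exp lo hi f <= c.
Proof.
move=> Hl H; apply: ge_sup.
  by exists (lo * f true + (1 - lo) * f false), lo => //; rewrite /= in_itv /= lexx Hl.
by move=> y [p /=]; rewrite in_itv /= => /andP[Ha Hb] <-; apply: H.
Qed.

Lemma gen_rcons (D : seq bool -> bool -> R) s x :
  gen_process D (rcons s x) = gen_process D s * D s x.
Proof.
rewrite /gen_process size_rcons big_ord_recr /=; congr (_ * _).
  apply: eq_bigr => k _; rewrite nth_rcons ltn_ord -cats1 takel_cat //.
  exact: ltnW.
by rewrite nth_rcons ltnn eqxx -cats1 takel_cat // take_size.
Qed.

Lemma geo n : \sum_(i < n) (2 ^- i.+1 : R) = 1 - 2 ^- n.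
Proof.
elim: n => [|n IH]; first by rewrite big_ord0 expr0 invr1 subrr.
rewrite big_ord_recr /= IH exprS invfM.
set y := 2 ^- n; lra.
Qed.

Lemma sum_widen (f : nat -> R) N n : (N <= n)%N -> (forall i, 0 <= f i) ->
  \sum_(i < N) f i <= \sum_(i < n) f i.
Proof.
move=> Hn Hf; elim: n Hn => [|n IH]; first by rewrite leqn0 => /eqP ->.
rewrite leq_eqVlt => /orP[/eqP -> //|]; rewrite ltnS => /IH H.
by rewrite big_ord_recr /= (le_trans H) // lerDl.
Qed.

Lemma cvg_finsum (F : nat -> nat -> R) (l : nat -> R) N :
  (forall i, F i @ \oo --> l i) ->
  (fun n => \sum_(i < N) F i n) @ \oo --> \sum_(i < N) l i.
Proof.
move=> H; elim: N => [|N IH].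
  rewrite big_ord0; under eq_fun do rewrite big_ord0; exact: cvg_cst.
rewrite big_ord_recr /=; under eq_fun do rewrite big_ord_recr /=.
exact: cvgD.
Qed.

End An.

Unset Implicit Arguments. Set Strict Implicit.

Theorem lemma5 (R : realType) (lo hi : R)
  (Hlo : 0 < lo) (Hlohi : lo <= hi) (Hhi : hi < 1)
  (D : nat -> seq bool -> bool -> R)
  (Dnn : forall i s x, 0 <= D i s x)
  (Dmult : forall i, supermart_multiplier lo hi (D i))
  (q : nat -> seq bool -> nat -> rat)
  (qrec : recursive_q3 q)
  (qmono : forall i s n, q i s n <= q i s n.+1)
  (qlim : forall i s, (fun n => (ratr (q i s n) : R)) @ \oo
                        --> gen_process (D i) s) :
  let T := fun s => limn (series (fun i => (2 ^- i.+1 : R) * gen_process (D i) s)) in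
  (forall s, cvgn (series (fun i => (2 ^- i.+1 : R) * gen_process (D i) s))) /\
  test_supermartingale lo hi T /\ lower_semicomputable T.
Proof.
move=> T.
have w0 : forall i, 0 <= (2 ^- i.+1 : R) by move=> i; rewrite invr_ge0 exprn_ge0.
set C := lo^-1 + (1 - hi)^-1.
have hlo0 : 0 <= lo by lra.
have Dub : forall i s x, D i s x <= C.
  move=> i s x.
  have e1 := ue_ge (D i s) hlo0 (ltW Hhi) (lexx lo) Hlohi.
  have e2 := ue_ge (D i s) hlo0 (ltW Hhi) Hlohi (lexx hi).
  have e3 := Dmult i s.
  have d1 := Dnn i s true; have d0 := Dnn i s false.
  have i1 : 0 < lo^-1 by rewrite invr_gt0.
  have hi0 : 0 < 1 - hi by rewrite subr_gt0.
  have i2 : 0 < (1-hi)^-1 by rewrite invr_gt0.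
  have k1 : D i s true <= lo^-1.
    rewrite -(ler_pM2l Hlo) mulfV ?gt_eqF //.
    have : 0 <= (1 - lo) * D i s false by rewrite mulr_ge0 //; lra.
    lra.
  have k0 : D i s false <= (1 - hi)^-1.
    rewrite -(ler_pM2l hi0) mulfV ?gt_eqF //.
    have : 0 <= hi * D i s true by rewrite mulr_ge0 //; lra.
    lra.
  rewrite /C; case: x; lra.
have C0' : 0 < C by rewrite /C addr_gt0 // invr_gt0 // subr_gt0.
have C0 : 0 <= C by apply: ltW.
have Gb : forall i s, 0 <= gen_process (D i) s <= C ^+ size s.
  move=> i s; apply/andP; split; first by apply: prodr_ge0 => k _; apply: Dnn.
  rewrite /gen_process -[in C ^+ _](card_ord (size s)) -prodr_const.
  by apply: ler_prod => k _; rewrite Dnn Dub.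
have sermono : forall s, nondecreasing_seq (series (fun i => (2 ^- i.+1 : R) * gen_process (D i) s)).
  move=> s; apply/nondecreasing_seqP => n; rewrite /series /= big_nat_recr //= lerDl.
  by rewrite mulr_ge0 // (andP (Gb _ _)).1.
have cvgS : forall s, cvgn (series (fun i => (2 ^- i.+1 : R) * gen_process (D i) s)).
  move=> s; apply: nondecreasing_is_cvgn => //.
  exists (C ^+ size s) => _ [n _ <-]; rewrite /series /= big_mkord.
  apply: (@le_trans _ _ (\sum_(i < n) (2 ^- i.+1 : R) * C ^+ size s)).
    by apply: ler_sum => i _; rewrite ler_wpM2l // (andP (Gb _ _)).2.
  rewrite -mulr_suml geo ger_pMl ?exprn_gt0 //.
split; first exact: cvgS.
split.
  split.
  - move=> s; rewrite /T; apply: limr_ge (cvgS s) _; apply: nearW => n.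
    rewrite /series /=; apply: sumr_ge0 => i _.
    by rewrite mulr_ge0 // (andP (Gb _ _)).1.
  - rewrite /T; apply/cvg_lim => //.
    have -> : (fun i => (2 ^- i.+1 : R) * gen_process (D i) [::]) =
              (fun k => 1 / (2 ^ (k + 0.+1))%:R).
      apply: funext => k; rewrite /gen_process big_ord0 mulr1 addn1 natrX div1r.
      by [].
    have := cvg_geometric_series_half (1 : R) 0.
    by rewrite expr0 divr1.
  - move=> s; apply: ue_le Hlohi _ => p Hp1 Hp2.
    suff : p * T (rcons s true) + (1 - p) * T (rcons s false) <= T s by lra.
    have hA := fun x => cvgS (rcons s x).
    have hc := cvgS s.
    rewrite /T; apply: (ler_cvg_to (cvgD (cvgM (cvg_cst p) (hA true)) (cvgM (cvg_cst (1 - p)) (hA false))) hc).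
    apply: nearW => n.
    rewrite /series /= !fctE /= !mulr_sumr -big_split /=; apply: ler_sum => i _.
    rewrite !gen_rcons.
    have e := ue_ge (D i s) hlo0 (ltW Hhi) Hp1 Hp2.
    have e3 := Dmult i s.
    have W0 : 0 <= (2 ^- i.+1 : R) * gen_process (D i) s by rewrite mulr_ge0 // (andP (Gb _ _)).1.
    have key := ler_wpM2l W0 (le_trans e e3).
    move: key; set x := (2 ^- i.+1 : R); set g := gen_process (D i) s.
    set d1 := D i s true; set d0 := D i s false; move=> key.
    nra.
have [aa [bb [dd [Ha Hb Hd Hq]]]] := qrec.
exists (fun s n => \sum_(i < n) 2 ^- i.+1 * Num.max (q i s n) 0).
split.
- exists (Af aa bb dd), (fun _ => 0%N), (Df dd); split.
  + exact: rf_Af.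
  + exact: rf_zero.
  + exact: rf_Df.
  + by move=> s n; rewrite -r_eq; apply: eq_bigr => i _; rewrite Hq.
- move=> s n; rewrite big_ord_recr /=.
  rewrite -[X in X <= _]addr0; apply: lerD; last by rewrite mulr_ge0 ?invr_ge0 ?exprn_ge0 // le_max lexx orbT.
  apply: ler_sum => i _; rewrite ler_wpM2l ?invr_ge0 ?exprn_ge0 //.
  exact: le_max2.
move=> s.
pose G i := gen_process (D i) s.
pose p i n := Num.max (ratr (q i s n) : R) 0.
have qnd : forall i, nondecreasing_seq (fun n => (ratr (q i s n) : R)).
  by move=> i; apply/nondecreasing_seqP => n; rewrite ler_rat.
have qle : forall i n, (ratr (q i s n) : R) <= G i.
  move=> i n; rewrite /G -(cvg_lim _ (qlim i s)) //.
  exact: (nondecreasing_cvgn_le (qnd i) (cvgP _ (qlim i s))).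
have pG : forall i n, 0 <= p i n <= G i.
  move=> i n; rewrite /p le_max lexx orbT /= ge_max qle /=.
  exact: (andP (Gb i s)).1.
have pcv : forall i, p i @ \oo --> G i.
  move=> i; apply: (squeeze_cvgr _ (qlim i s) (cvg_cst (G i))).
  apply: nearW => n; rewrite /p le_max lexx /=.
  by rewrite (andP (pG i n)).2.
have pmono : forall i n, p i n <= p i n.+1.
  by move=> i n; rewrite /p le_max2 // ler_rat.
have ratr_max : forall x : rat, (ratr (Num.max x 0) : R) = Num.max (ratr x) 0.
  move=> x; rewrite !maxEle -(rmorph0 (ratr : rat -> R)) ler_rat.
  by case: (x <= 0).
have -> : (fun n => (ratr (\sum_(i < n) 2 ^- i.+1 * Num.max (q i s n) 0) : R)) =
          (fun n => \sum_(i < n) (2 ^- i.+1 : R) * p i n).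
  apply: funext => n; rewrite rmorph_sum; apply: eq_bigr => i _.
  by rewrite rmorphM /= fmorphV rmorphXn /= rmorph_nat ratr_max.
set U := fun n => \sum_(i < n) (2 ^- i.+1 : R) * p i n.
have Umono : nondecreasing_seq U.
  apply/nondecreasing_seqP => n; rewrite /U big_ord_recr /=.
  rewrite -[X in X <= _]addr0; apply: lerD; last by rewrite mulr_ge0 // (andP (pG _ _)).1.
  by apply: ler_sum => i _; rewrite ler_wpM2l.
have Ub : forall n, U n <= T s.
  move=> n; apply: (@le_trans _ _ (series (fun i => (2 ^- i.+1 : R) * G i) n)).
    rewrite /U /series /= big_mkord; apply: ler_sum => i _.
    by rewrite ler_wpM2l // (andP (pG _ _)).2.
  exact: (nondecreasing_cvgn_le (sermono s) (cvgS s)).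
have Ucv : cvgn U.
  by apply: nondecreasing_is_cvgn => //; exists (T s) => _ [n _ <-].
suff <- : limn U = T s by [].
apply/le_anti/andP; split.
  by apply: limr_le Ucv _; apply: nearW.
rewrite /T; apply: limr_le (cvgS s) _.
apply: nearW => N.
have cN : (fun n => \sum_(i < N) (2 ^- i.+1 : R) * p i n) @ \oo --> \sum_(i < N) (2 ^- i.+1 : R) * G i.
  apply: (@cvg_finsum R (fun i n => (2 ^- i.+1 : R) * p i n) (fun i => (2 ^- i.+1 : R) * G i) N) => i.
  by apply: cvgM; [exact: cvg_cst | exact: pcv].
rewrite /series /= big_mkord.
apply: (ler_cvg_to cN (cvg_cst (limn U))).
exists N => // n /= Hn.
apply: le_trans (nondecreasing_cvgn_le Umono Ucv n).
apply: (sum_widen (f := fun i => (2 ^- i.+1 : R) * p i n)) => // i.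
by rewrite mulr_ge0 // (andP (pG _ _)).1.
Qed.
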